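(* $\mathbf{Fin}<_{\mathrm{Learn}} Id <_{\mathrm{Learn}} \mathbf{co}$, and $\mathbf{Fin}\equiv^{\mathrm{fin}}_{\mathrm{Learn}} Id\equiv^{\mathrm{fin}}_{\mathrm{Learn}}\mathbf{co}$. That is: every $\mathbf{Fin}$-learnable family is $Id$-learnable, every $Id$-learnable family is $\mathbf{co}$-learnable, there is an $Id$-learnable family that is not $\mathbf{Fin}$-learnable, there is a $\mathbf{co}$-learnable family that is not $Id$-learnable, and for finite families the three notions coincide.
   Context: All structures are countable, have domain $\mathbb{N}$, are in a finite relational signature, and are identified with their atomic diagrams (elements of $2^{\mathbb{N}}$). A family of structures $\mathfrak{K}$ is a countable set of pairwise nonisomorphic such structures. $\mathcal{S}\restriction_s$ is the finite substructure of $\mathcal{S}$ on $\{0,\dots,s\}$. $\mathrm{LD}(\mathfrak{K})\subseteq 2^{\mathbb{N}}$ is the set of structures with domain $\mathbb{N}$ isomorphic to a member of $\mathfrak{K}$ (subspace topology). The hypothesis space is $\{\ulcorner\mathcal{A}\urcorner:\mathcal{A}\in\mathfrak{K}\}\cup\{?\}$; a learner is an arbitrary function from $\{\mathcal{S}\restriction_s:\mathcal{S}\in\mathrm{LD}(\mathfrak{K})\}$ to the hypothesis space. $\mathbf{Fin}$-learnable: some learner $\mathbf{M}$ such that for each $\mathcal{S}\in\mathrm{LD}(\mathfrak{K})$ there is $s_0$ with $\mathbf{M}(\mathcal{S}\restriction_t)=?$ for $t<s_0$ and $\mathbf{M}(\mathcal{S}\restriction_t)=\ulcorner\mathcal{A}\urcorner$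 for $t\ge s_0$, where $\mathcal{A}\cong\mathcal{S}$. $\mathbf{co}$-learnable: some learner $\mathbf{M}$ such that for each $\mathcal{S}\in\mathrm{LD}(\mathfrak{K})$, $\{\mathbf{M}(\mathcal{S}\restriction_s):s\}\setminus\{?\}=\{\ulcorner\mathcal{B}\urcorner:\mathcal{B}\in\mathfrak{K},\mathcal{B}\neq\mathcal{A}\}$ where $\mathcal{A}\cong\mathcal{S}$. For an equivalence relation $E$ on a space $X$, $\mathfrak{K}$ is $E$-learnable if there is a continuous $\Gamma:\mathrm{LD}(\mathfrak{K})\to X$ with $\mathcal{S}\cong\mathcal{S}'\iff\Gamma(\mathcal{S})\,E\,\Gamma(\mathcal{S}')$ for all $\mathcal{S},\mathcal{S}'\in\mathrm{LD}(\mathfrak{K})$. $Id$ is equality on Baire space $\mathbb{N}^{\mathbb{N}}$. For learning criteria $X,Y$ (learning paradigms or equivalence relations): $X\leq_{\mathrm{Learn}}Y$ means every $X$-learnable family is $Y$-learnable; $X\leq^{\mathrm{fin}}_{\mathrm{Learn}}Y$ means every finite $X$-learnable family is $Y$-learnable; $<$ means $\leq$ and not $\geq$; $\equiv$ means both directions. *)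

(* Defs.v *)
From Stdlib Require List.
From mathcomp Require Import all_boot.
Set Implicit Arguments. Unset Strict Implicit. Unset Printing Implicit Defensive.

(* A structure with domain nat is identified with its atomic diagram:
   for every symbol r and every (ar r)-tuple of naturals, a bit. *)
Definition structure (n : nat) (ar : 'I_n -> nat) : Type :=
  forall r : 'I_n, (ar r).-tuple nat -> bool.

Definition iso (n : nat) (ar : 'I_n -> nat) (S S' : structure ar) : Prop :=
  exists f : nat -> nat, bijective f /\
    forall (r : 'I_n) (t : (ar r).-tuple nat), S r t = S' r (map_tuple f t).

Definition agree_upto (n : nat) (ar : 'I_n -> nat) (s : nat)
  (S S' : structure ar) : Prop :=
  forall (r : 'I_n) (t : (ar r).-tuple nat),
    all (fun x => x <= s) t -> S r t = S' r t.

Definition struct_family (n : nat) (ar : 'I_n -> nat) (I : Type)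
  (A : I -> structure ar) : Prop :=
  (exists c : I -> nat, injective c) /\
  (forall i j : I, iso (A i) (A j) -> i = j).

Definition finite_family (I : Type) : Prop :=
  exists l : list I, forall i : I, Stdlib.Lists.List.In i l.

Definition LD (n : nat) (ar : 'I_n -> nat) (I : Type)
  (A : I -> structure ar) (S : structure ar) : Prop :=
  exists i : I, iso (A i) S.

(* A learner: maps S|_s (for S in LD(K)) to a hypothesis in
   {code of A i} u {?}, coded as option I (None = ?).  We represent it as a
   function of s and S that depends only on S|_s. *)
Definition learner (n : nat) (ar : 'I_n -> nat) (I : Type)
  (A : I -> structure ar) (M : nat -> structure ar -> option I) : Prop :=
  forall (s : nat) (S S' : structure ar), LD A S -> LD A S' ->
    agree_upto s S S' -> M s S = M s S'.

Definition Fin_learnable (n : nat) (ar : 'I_n -> nat) (I : Type)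
  (A : I -> structure ar) : Prop :=
  exists M, learner A M /\
    forall S, LD A S -> exists s0 : nat,
      (forall t, t < s0 -> M t S = None) /\
      (exists i, iso (A i) S /\ forall t, s0 <= t -> M t S = Some i).

Definition co_learnable (n : nat) (ar : 'I_n -> nat) (I : Type)
  (A : I -> structure ar) : Prop :=
  exists M, learner A M /\
    forall S, LD A S -> forall i, iso (A i) S ->
      forall j : I, (exists s, M s S = Some j) <-> j <> i.

(* Continuity of Gamma : LD(K) -> Baire space (subspace of 2^N with the
   product topology; with a finite signature, basic opens are determined by
   finite restrictions S|_s). *)
Definition continuous_on_LD (n : nat) (ar : 'I_n -> nat) (I : Type)
  (A : I -> structure ar) (G : structure ar -> nat -> nat) : Prop :=
  forall S, LD A S -> forall k : nat, exists s : nat,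
    forall S', LD A S' -> agree_upto s S S' -> G S' k = G S k.

(* E-learnability for E = Id, equality on Baire space. *)
Definition Id_learnable (n : nat) (ar : 'I_n -> nat) (I : Type)
  (A : I -> structure ar) : Prop :=
  exists G : structure ar -> nat -> nat, continuous_on_LD A G /\
    forall S S', LD A S -> LD A S' ->
      (iso S S' <-> (forall k, G S k = G S' k)).

(* Main.v *)
Require Import Defs.
From mathcomp Require Import all_boot zify.
From Stdlib Require Import Classical ClassicalEpsilon FunctionalExtensionality PropExtensionality Lia.
From Stdlib Require Cantor.
Set Implicit Arguments. Unset Strict Implicit. Unset Printing Implicit Defensive.

Lemma iso_refl n (ar : 'I_n -> nat) (S : structure ar) : iso S S.
Proof.
exists id; split; first by exists id.
by move=> r t; congr (S r _); apply: val_inj; rewrite /= map_id.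
Qed.

Lemma iso_sym n (ar : 'I_n -> nat) (S S' : structure ar) : iso S S' -> iso S' S.
Proof.
move=> [f [[g fg gf] H]]; exists g; split; first by exists f.
move=> r t; rewrite H; congr (S' r _); apply: val_inj => /=.
by rewrite -map_comp (eq_map gf) map_id.
Qed.

Lemma iso_trans n (ar : 'I_n -> nat) (S1 S2 S3 : structure ar) :
  iso S1 S2 -> iso S2 S3 -> iso S1 S3.
Proof.
move=> [f [bf H]] [g [bg H']]; exists (g \o f); split; first exact: bij_comp.
move=> r t; rewrite H H'; congr (S3 r _); apply: val_inj => /=.
by rewrite map_comp.
Qed.

Lemma agree_sym n (ar : 'I_n -> nat) s (S S' : structure ar) :
  agree_upto s S S' -> agree_upto s S' S.
Proof. by move=> H r t Ht; rewrite H. Qed.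

Lemma agree_trans n (ar : 'I_n -> nat) s (S1 S2 S3 : structure ar) :
  agree_upto s S1 S2 -> agree_upto s S2 S3 -> agree_upto s S1 S3.
Proof. by move=> H H' r t Ht; rewrite H // H'. Qed.

Lemma agree_mono n (ar : 'I_n -> nat) s s' (S S' : structure ar) :
  s' <= s -> agree_upto s S S' -> agree_upto s' S S'.
Proof.
move=> le H r t Ht; apply: H; apply: sub_all Ht => x /= hx; exact: leq_trans le.
Qed.

Lemma class_uniq n (ar : 'I_n -> nat) I (A : I -> structure ar) S i j :
  struct_family A -> iso (A i) S -> iso (A j) S -> i = j.
Proof.
move=> [_ H] hi hj; apply: H; apply: iso_trans hi _; exact: iso_sym.
Qed.

Definition pick (I : Type) (P : I -> Prop) : option I :=
  match excluded_middle_informative (exists j, P j) with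
  | left H => Some (proj1_sig (constructive_indefinite_description _ H))
  | right _ => None end.

Lemma pick_some I (P : I -> Prop) j : pick P = Some j -> P j.
Proof.
rewrite /pick; case: excluded_middle_informative => // H [<-].
exact: proj2_sig.
Qed.

Lemma pick_none I (P : I -> Prop) : pick P = None -> ~ exists j, P j.
Proof. by rewrite /pick; case: excluded_middle_informative. Qed.

Lemma pick_ex I (P : I -> Prop) : (exists j, P j) -> exists j, pick P = Some j.
Proof. by rewrite /pick; case: excluded_middle_informative => // H _; eexists. Qed.

Lemma least_ex (P : nat -> Prop) n : P n -> exists m, P m /\ forall k, k < m -> ~ P k.
Proof.
elim: n {-2}n (leqnn n) => [|N IH] n Hn Pn.
  by exists n; split=> // k Hk; lia.
case: (classic (exists k, k < n /\ P k)) => [[k [Hk Pk]]|H].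
  by apply: (IH k) => //; lia.
by exists n; split=> // k Hk Pk; apply: H; exists k.
Qed.

Lemma fin_id n (ar : 'I_n -> nat) I (A : I -> structure ar) :
  struct_family A -> Fin_learnable A -> Id_learnable A.
Proof.
move=> SF [M [HL HF]].
have [c cinj] := SF.1.
pose code (S : structure ar) : nat :=
  match excluded_middle_informative (LD A S) with
  | left H => c (proj1_sig (constructive_indefinite_description _ H))
  | right _ => 0 end.
have codeE S i : iso (A i) S -> code S = c i.
  move=> hi; rewrite /code; case: excluded_middle_informative => [H|[]]; last by exists i.
  congr c; move: (proj2_sig (constructive_indefinite_description _ H)) => h; exact: (class_uniq SF h hi).
exists (fun S _ => code S); split.
  move=> S [i hi] k; have [s0 [Hn [i0 [hi0 Hs]]]] := HF S (ex_intro _ i hi).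
  exists s0 => S' LS' ag.
  have E : M s0 S' = Some i0 by rewrite -(Hs s0 (leqnn _)); apply: (HL s0 S' S LS' (ex_intro _ i hi)); exact: agree_sym.
  have [s1 [Hn1 [i1 [hi1 Hs1]]]] := HF S' LS'.
  case: (ltnP s0 s1) => h; first by rewrite Hn1 in E.
  rewrite Hs1 // in E; case: E => E1; subst i1.
  by rewrite (codeE _ _ hi1) (codeE _ _ hi0).
move=> S S' [i hi] [i' hi']; split.
  move=> hS k; rewrite (codeE _ _ hi) (codeE _ i (iso_trans hi hS)) //.
move=> /(_ 0); rewrite (codeE _ _ hi) (codeE _ _ hi') => /cinj E; subst i'.
exact: iso_trans (iso_sym hi) hi'.
Qed.

Definition dcode (s : nat) := (Cantor.of_nat s).1.

Lemma dcodeE j s0 : dcode (Cantor.to_nat (j, s0)) = j /\ s0 <= Cantor.to_nat (j, s0).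
Proof.
rewrite /dcode Cantor.cancel_of_to; split=> //.
have := Cantor.to_nat_non_decreasing j s0; lia.
Qed.

Lemma id_co n (ar : 'I_n -> nat) I (A : I -> structure ar) :
  struct_family A -> Id_learnable A -> co_learnable A.
Proof.
move=> SF [G [Gc Gi]].
have [c cinj] := SF.1.
pose W s S j := exists k, forall S', LD A S' -> agree_upto s S S' -> G S' k <> G (A j) k.
have WE s S S' : agree_upto s S S' -> W s S = W s S'.
  move=> ag; apply: functional_extensionality => j; apply: propositional_extensionality.
  split=> [] [k Hk]; exists k => S'' L'' ag'; apply: Hk => //.
    exact: agree_trans ag ag'.
  exact: agree_trans (agree_sym ag) ag'.
exists (fun s S => pick (fun j => c j = dcode s /\ W s S j)); split.
  by move=> s S S' _ _ ag; rewrite (WE _ _ _ ag).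
move=> S LS i hi j; split.
  move=> [s Hs]; have H := pick_some Hs; have [_ [k Hk]] : c j = dcode s /\ W s S j := H; move=> eji; subst j.
  apply: (Hk S LS (fun r t _ => erefl)); apply: esym.
  exact: ((Gi (A i) S (ex_intro _ i (iso_refl _)) LS).1 hi k).
move=> nji.
have nG : ~ (forall k, G S k = G (A j) k).
  move=> /(Gi S (A j) LS (ex_intro _ j (iso_refl _))).2 h.
  by apply: nji; apply/esym; apply: (class_uniq SF hi); exact: iso_sym.
have [k Hk] : exists k, G S k <> G (A j) k.
  by apply: not_all_ex_not.
have [s0 Hs0] := Gc S LS k.
have [ds le] := dcodeE (c j) s0.
set s := Cantor.to_nat (c j, s0) in ds le.
have [j' Hj'] : exists j', pick (fun j1 => c j1 = dcode s /\ W s S j1) = Some j'.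
  apply: pick_ex; exists j; split; first by rewrite ds.
  by exists k => S' L' ag; rewrite (Hs0 S' L' (agree_mono le ag)).
exists s; rewrite Hj'.
have [H1 _] := pick_some Hj'; rewrite ds in H1.
by rewrite (cinj _ _ H1).
Qed.

Lemma co_fin n (ar : 'I_n -> nat) I (A : I -> structure ar) :
  struct_family A -> finite_family I -> co_learnable A -> Fin_learnable A.
Proof.
move=> SF [l Hl] [M [HL HC]].
pose Q s S i := forall j, j <> i -> exists t, t <= s /\ M t S = Some j.
have QE s S S' : LD A S -> LD A S' -> agree_upto s S S' -> Q s S = Q s S'.
  move=> LS LS' ag; apply: functional_extensionality => i; apply: propositional_extensionality.
  have E t : t <= s -> M t S = M t S' by move=> le; apply: HL => //; exact: agree_mono le ag.
  split=> H j nji; have [t [le Ht]] := H j nji; exists t; split=> //.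
    by rewrite -E.
  by rewrite E.
exists (fun s S => pick (Q s S)); split.
  by move=> s S S' LS LS' ag; rewrite (QE s S S' LS LS' ag).
move=> S LS; have [i hi] := LS.
have Qu s i' : Q s S i' -> i' = i.
  move=> H; apply: NNPP => ne; have [t [_ Ht]] := H i (fun e => ne (esym e)).
  by have := (HC S LS i hi i).1 (ex_intro _ t Ht).
have Qm s s' i' : s <= s' -> Q s S i' -> Q s' S i'.
  move=> le H j nj; have [t [lt Ht]] := H j nj; exists t; split=> //; exact: leq_trans le.
have [s1 Hs1] : exists s1, Q s1 S i.
  suff : forall l', exists s1, forall j, List.In j l' -> j <> i -> exists t, t <= s1 /\ M t S = Some j.
    by move=> /(_ l) [s1 H]; exists s1 => j nj; apply: H.
  elim=> [|a l' [s1 IH]]; first by exists 0.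
  case: (classic (a = i)) => [ai|nai].
    exists s1 => j [aj|jl] nj; [by subst; case: nj|exact: IH].
  have [t Ht] := (HC S LS i hi a).2 nai.
  exists (maxn s1 t) => j [aj|jl] nj.
    by subst j; exists t; split=> //; apply: leq_maxr.
  have [t' [le Ht']] := IH j jl nj; exists t'; split=> //; exact: leq_trans le (leq_maxl _ _).
have [s0 [[i0 Hi0] Hmin]] := least_ex (P := fun s => exists i', Q s S i') (ex_intro _ i Hs1).
exists s0; split.
  move=> t lt; case E : (pick (Q t S)) => [j|] //.
  by case: (Hmin t lt); exists j; exact: pick_some E.
exists i; split=> // t le.
have [j Hj] := pick_ex (ex_intro _ i (Qm _ _ _ le (eq_ind _ _ Hi0 _ (Qu _ _ Hi0)))).
by rewrite Hj (Qu _ _ (pick_some Hj)).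
Qed.
Definition sig2 : 'I_1 -> nat := fun _ => 2.
Definition E (S : structure sig2) (a b : nat) : bool := S ord0 [tuple a; b].

Definition FeatB (s m : nat) (S : structure sig2) : Prop :=
  exists ls : seq nat, [/\ all (fun x => x <= s) ls, size ls = m, uniq ls & cycle (E S) ls].
Definition Feat m S := exists s, FeatB s m S.

Lemma featB_agree s m S S' : agree_upto s S S' -> FeatB s m S -> FeatB s m S'.
Proof.
move=> ag [ls [Hb Hs Hu Hc]]; exists ls; split=> //.
rewrite -(eq_in_cycle (P := fun x => x <= s) (e := E S)) //.
move=> a b ha hb; rewrite /E ag //=; by move: ha hb; rewrite -!topredE /= => -> ->.
Qed.

Lemma featB_mono s s' m S : s <= s' -> FeatB s m S -> FeatB s' m S.
Proof.
move=> le [ls [Hb Hs Hu Hc]]; exists ls; split=> //.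
by apply: sub_all Hb => x /= h; exact: leq_trans le.
Qed.

Lemma all_maxl (l : seq nat) : all (fun x => x <= foldr maxn 0 l) l.
Proof.
elim: l => //= a l IH; rewrite leq_maxl /=.
by apply: sub_all IH => x /= h; apply: leq_trans h (leq_maxr _ _).
Qed.

Lemma feat_iso m S S' : iso S S' -> Feat m S -> Feat m S'.
Proof.
move=> [f [bf H]] [s [ls [Hb Hs Hu Hc]]].
exists (foldr maxn 0 (map f ls)), (map f ls); split.
- exact: all_maxl.
- by rewrite size_map.
- by rewrite map_inj_uniq //; exact: bij_inj.
rewrite cycle_map; move: Hc; congr is_true; apply: eq_cycle => a b /=.
rewrite /E H; congr (S' ord0 _); exact: val_inj.
Qed.

Definition pr (j r : nat) := Cantor.to_nat (j, r).
Definition fstp x := (Cantor.of_nat x).1.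
Definition sndp x := (Cantor.of_nat x).2.
Lemma fstp_pr j r : fstp (pr j r) = j. Proof. by rewrite /fstp /pr Cantor.cancel_of_to. Qed.
Lemma sndp_pr j r : sndp (pr j r) = r. Proof. by rewrite /sndp /pr Cantor.cancel_of_to. Qed.
Lemma pr_fs x : pr (fstp x) (sndp x) = x.
Proof. by rewrite /pr /fstp /sndp -surjective_pairing Cantor.cancel_to_of. Qed.
Lemma fstp_le x : fstp x <= x.
Proof.
have H := Cantor.to_nat_non_decreasing (fstp x) (sndp x).
change (Cantor.to_nat (fstp x, sndp x)) with (pr (fstp x) (sndp x)) in H; rewrite pr_fs in H; lia.
Qed.
Lemma pr_inj j : injective (pr j).
Proof. by move=> a b /(congr1 sndp); rewrite !sndp_pr. Qed.

Definition step (m r : nat) := if r < m then r.+1 %% m else r.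
Definition nxt (sg : nat -> nat) x := pr (fstp x) (step (sg (fstp x)) (sndp x)).
Definition L (sg : nat -> nat) : structure sig2 :=
  fun r t => nxt sg (nth 0 t 0) == nth 0 t 1.

Lemma iter_nxt sg j r k : iter k (nxt sg) (pr j r) = pr j (iter k (step (sg j)) r).
Proof.
elim: k => //= k ->; by rewrite /nxt fstp_pr sndp_pr.
Qed.

Lemma iter_step_lt q r k : r < q -> iter k (step q) r = (r + k) %% q.
Proof.
move=> rq; elim: k => [|k IH] /=; first by rewrite addn0 modn_small.
rewrite IH /step ltn_pmod; last by lia.
by rewrite -addn1 modnDml addn1 addnS.
Qed.

Lemma iter_step_ge q r k : q <= r -> iter k (step q) r = r.
Proof. move=> qr; elim: k => //= k ->; by rewrite /step ltnNge qr. Qed.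

Lemma L_agree sg sg' s : (forall j, j <= s -> sg j = sg' j) -> agree_upto s (L sg) (L sg').
Proof.
move=> H r t Ht; rewrite /L /nxt H //.
have : nth 0 t 0 <= s.
  case: t Ht => [[|a l] /= _] //; by move=> /andP [].
move=> h; exact: leq_trans (fstp_le _) h.
Qed.

Lemma L_perm sg rho (p : nat -> nat) : bijective p -> (forall j, rho j = sg (p j)) ->
  iso (L rho) (L sg).
Proof.
move=> [q pq qp] Hr.
pose f x := pr (p (fstp x)) (sndp x).
pose g x := pr (q (fstp x)) (sndp x).
exists f; split.
  exists g => x; rewrite /f /g fstp_pr sndp_pr ?pq ?qp pr_fs //.
move=> r t; rewrite /L /=.
have sz : size t = 2 by rewrite size_tuple.
rewrite (nth_map 0) ?sz // (nth_map 0) ?sz //.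
have -> : nxt sg (f (nth 0 t 0)) = f (nxt rho (nth 0 t 0)).
  by rewrite /f /nxt !fstp_pr !sndp_pr Hr.
apply/esym; apply: inj_eq; move=> x y; rewrite /f => /(congr1 (fun z => (fstp z, sndp z))).
rewrite !fstp_pr !sndp_pr => -[/(can_inj pq) h1 h2].
by rewrite -[x]pr_fs -[y]pr_fs h1 h2.
Qed.

Lemma mod_fact r m q : r < q -> 0 < m -> (r + m) %% q = r -> q <= m.
Proof.
move=> rq m0 H; case: (ltnP m q) => // mq.
case: (ltnP (r + m) q) => h.
  by rewrite modn_small in H => //; lia.
have e : r + m = (r + m - q) + q by lia.
rewrite e modnDr modn_small in H; lia.
Qed.

Lemma traject_iota sg j k r : r + k <= sg j ->
  traject (nxt sg) (pr j r) k = map (pr j) (iota r k).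
Proof.
elim: k r => [|k IH] r h //=.
congr (_ :: _); case: k IH h => [|k] IH h //.
rewrite -IH; last by lia.
rewrite /nxt fstp_pr sndp_pr /step ifT ?modn_small //; lia.
Qed.

Lemma feat_L sg m : 2 <= m -> (Feat m (L sg) <-> exists j, sg j = m).
Proof.
move=> m2; split.
  move=> [s [[|x p] [_ Hs Hu Hc]]]; first by move: Hs => /= h; lia.
  have Hc' : fpath (nxt sg) x (rcons p x) := Hc.
  have Ht := fpathE Hc'.
  rewrite size_rcons in Ht; rewrite /= in Hs; rewrite Hs in Ht.
  have Ht2 : traject (nxt sg) x m.+1 = rcons (traject (nxt sg) x m) (iter m (nxt sg) x) by rewrite trajectSr.
  rewrite trajectS -Ht -rcons_cons in Ht2.
  have [Htm Hit] := rcons_inj (esym Ht2).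
  have Hnit k : 0 < k < m -> iter k (nxt sg) x != x.
    move=> /andP [k0 km].
    have := nth_uniq x (s := traject (nxt sg) x m) (i := k) (j := 0).
    rewrite size_traject nth_traject // nth_traject //; last by lia.
    rewrite Htm => -> //; last by lia.
    lia.
  rewrite -(pr_fs x) in Hit Hnit; set j := fstp x in Hit Hnit; set r := sndp x in Hit Hnit.
  exists j; set q := sg j.
  case: (ltnP r q) => rq; last first.
    have := Hnit 1; rewrite iter_nxt iter_step_ge // eqxx; lia.
  rewrite iter_nxt iter_step_lt // in Hit; have Hm := pr_inj Hit.
  have qm := mod_fact rq (ltnW m2) Hm.
  case: (ltnP q m) => qm'; last by apply/eqP; rewrite eqn_leq qm qm'.
  have := Hnit q; rewrite iter_nxt iter_step_lt // modnDr modn_small // eqxx; lia.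
move=> [j Hj]; set x := pr j 0.
have Hl : traject (nxt sg) x m = map (pr j) (iota 0 m) by rewrite traject_iota // Hj.
exists (foldr maxn 0 (traject (nxt sg) x m)), (traject (nxt sg) x m); split.
- exact: all_maxl.
- by rewrite size_traject.
- by rewrite Hl map_inj_uniq ?iota_uniq //; exact: pr_inj.
change (fcycle (nxt sg) (traject (nxt sg) x m)).
case: m m2 Hj Hl => [|m'] // m2 Hj Hl; rewrite trajectS /=.
have -> : rcons (traject (nxt sg) (nxt sg x) m') x = traject (nxt sg) (nxt sg x) m'.+1.
  rewrite trajectSr -iterSr /x iter_nxt iter_step_lt; last by rewrite Hj.
  by rewrite Hj add0n modnn.
exact: fpath_traject.
Qed.

Definition sA (i j : nat) : nat := 2 * j.+1 + (j.+1 == i).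
Definition Af (i : nat) : structure sig2 := L (sA i).

Lemma featA_odd k i : Feat (2 * k + 3) (Af i) <-> i = k.+1.
Proof.
rewrite feat_L; last by lia.
split.
  move=> [j]; rewrite /sA; case: eqP => /= h e; lia.
by move=> ->; exists k; rewrite /sA eqxx /=; lia.
Qed.

Lemma featA_even k i : Feat (2 * k + 2) (Af i) <-> i <> k.+1.
Proof.
rewrite feat_L; last by lia.
split.
  move=> [j]; rewrite /sA; case: eqP => /= h e; lia.
by move=> h; exists k; rewrite /sA; case: eqP => /= h'; lia.
Qed.

Lemma Af_family : struct_family Af.
Proof.
split; first by exists id.
move=> i i' h.
have E k : i = k.+1 <-> i' = k.+1.
  rewrite -!featA_odd; split; [exact: feat_iso h|exact: feat_iso (iso_sym h)].
clear h; case: i E => [|i] E; case: i' E => [|i'] E //.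
- by have := (E i').2 erefl.
- by have := (E i).1 erefl.
- by have := (E i).1 erefl => -[->].
Qed.

Lemma Af_id : Id_learnable Af.
Proof.
pose G (S : structure sig2) (k : nat) : nat :=
  if excluded_middle_informative (Feat (2 * k + 3) S) then 1 else 0.
have GE S i k : iso (Af i) S -> G S k = if i == k.+1 then 1 else 0.
  move=> h; rewrite /G; case: excluded_middle_informative => H.
    by have /featA_odd -> := feat_iso (iso_sym h) H; rewrite eqxx.
  case: eqP => // e; case: H; apply: feat_iso h _; exact/featA_odd.
exists G; split.
  move=> S [i hi] k.
  case: (classic (i = k.+1)) => e.
    have [s0 Hs0] := feat_iso hi ((featA_odd k i).2 e).
    exists s0 => S' [i' hi'] ag.
    have F := feat_iso (iso_sym hi') (ex_intro _ s0 (featB_agree ag Hs0)).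
    by rewrite (GE _ _ _ hi) (GE _ _ _ hi') (featA_odd k i').1 // e.
  have [s0 Hs0] := feat_iso hi ((featA_even k i).2 e).
  exists s0 => S' [i' hi'] ag.
  have F := feat_iso (iso_sym hi') (ex_intro _ s0 (featB_agree ag Hs0)).
  have e' := (featA_even k i').1 F.
  rewrite (GE _ _ _ hi) (GE _ _ _ hi'); case: eqP => // _; case: eqP => //.
move=> S S' [i hi] [i' hi']; split.
  by move=> h k; rewrite (GE _ _ _ hi) (GE _ _ _ (iso_trans hi h)).
move=> H.
have ii : i = i'.
  have E k : i = k.+1 <-> i' = k.+1.
    have := H k; rewrite (GE _ _ _ hi) (GE _ _ _ hi').
    by case: eqP; case: eqP.
  case: i E {hi} => [|i] E; case: i' E {hi'} => [|i'] E //.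
  - by have := (E i').2 erefl.
  - by have := (E i).1 erefl.
  - by have := (E i).1 erefl => -[->].
subst i'; exact: iso_trans (iso_sym hi) hi'.
Qed.

Lemma Af_notfin : ~ Fin_learnable Af.
Proof.
move=> [M [HL HF]].
have L0 : LD Af (Af 0) by exists 0; exact: iso_refl.
have [s0 [_ [i0 [hi0 Hs0]]]] := HF _ L0.
have e0 : i0 = 0 by apply: (Af_family.2); exact: hi0.
subst i0.
set n := s0.+2.
have Ln : LD Af (Af n) by exists n; exact: iso_refl.
have ag : agree_upto s0 (Af 0) (Af n).
  apply: L_agree => j hj; rewrite /sA; case: eqP => // _; case: eqP => //; lia.
have E : M s0 (Af n) = Some 0 by rewrite -(HL _ _ _ L0 Ln ag) Hs0.
have [s1 [Hn1 [i1 [hi1 Hs1]]]] := HF _ Ln.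
have e1 : i1 = n by apply: (Af_family.2); exact: hi1.
case: (ltnP s0 s1) => h; first by rewrite Hn1 in E.
by rewrite Hs1 // e1 in E.
Qed.

Definition tB (i j : nat) : nat := if j.+1 == i then 2 else j + 3.
Definition Bf (i : nat) : structure sig2 := L (tB i).

Lemma featBf k i : Feat (k + 2) (Bf i) <-> k <> i.
Proof.
rewrite feat_L; last by lia.
split.
  move=> [j]; rewrite /tB; case: eqP => h e; lia.
move=> h; case: k h => [|k] h.
  by exists i.-1; rewrite /tB; case: eqP => //; lia.
by exists k; rewrite /tB; case: eqP => //; lia.
Qed.

Lemma Bf_family : struct_family Bf.
Proof.
split; first by exists id.
move=> i i' h; apply: NNPP => ne.
have := (featBf i' i).2 (fun e => ne (esym e)).
by move=> /(feat_iso h) /featBf.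
Qed.

Lemma Bf_co : co_learnable Bf.
Proof.
exists (fun s S => pick (fun j => j = dcode s /\ FeatB s (j + 2) S)); split.
  move=> s S S' _ _ ag.
  have -> : (fun j => j = dcode s /\ FeatB s (j + 2) S) = (fun j => j = dcode s /\ FeatB s (j + 2) S').
    apply: functional_extensionality => j; apply: propositional_extensionality.
    split=> -[e F]; split=> //; [exact: featB_agree ag F|exact: featB_agree (agree_sym ag) F].
  by [].
move=> S LS i hi j; split.
  move=> [s Hs]; have [_ F] := pick_some Hs.
  exact/(featBf j i)/(feat_iso (iso_sym hi) (ex_intro _ s F)).
move=> nji; have [s0 F] := feat_iso hi ((featBf j i).2 nji).
have [ds le] := dcodeE j s0.
set s := Cantor.to_nat (j, s0) in ds le.
have [j' Hj'] := pick_ex (P := fun j1 => j1 = dcode s /\ FeatB s (j1 + 2) S)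
  (ex_intro _ j (conj (esym ds) (featB_mono le F))).
exists s; rewrite Hj'; have [e _] := pick_some Hj'; by rewrite e ds.
Qed.

Lemma Bf_notid : ~ Id_learnable Bf.
Proof.
move=> [G [Gc Gi]].
have LB i : LD Bf (Bf i) by exists i; exact: iso_refl.
have [k Hk] : exists k, G (Bf 0) k <> G (Bf 1) k.
  apply: not_all_ex_not => /(Gi _ _ (LB 0) (LB 1)).2 /Bf_family.2; done.
have [s0 H0] := Gc _ (LB 0) k.
have [s1 H1] := Gc _ (LB 1) k.
set n := (maxn s0 s1).+2.
pose sw j := if j == 0 then n.-1 else if j == n.-1 then 0 else j.
have swK : cancel sw sw.
  move=> j; rewrite /sw; repeat (case: eqP; simpl); lia.
pose T' := L (fun j => tB n (sw j)).
have hT : iso T' (Bf n) by apply: (L_perm (p := sw)) => //; exists sw.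
have LT : LD Bf T' by exists n; exact: iso_sym.
have ag0 : agree_upto s0 (Bf 0) (Bf n).
  apply: L_agree => j hj; rewrite /tB; case: eqP => // _; case: eqP => //; lia.
have ag1 : agree_upto s1 (Bf 1) T'.
  apply: L_agree => j hj; rewrite /tB /sw /n; repeat (case: eqP; simpl); lia.
have E0 := H0 _ (LB n) ag0.
have E1 := H1 _ LT ag1.
have E : G (Bf n) k = G T' k := (Gi _ _ (LB n) LT).1 (iso_sym hT) k.
by apply: Hk; rewrite -E0 -E1.
Qed.

Theorem mainTheorem5 :
  (* Fin <=_Learn Id *)
  (forall (n : nat) (ar : 'I_n -> nat) (I : Type) (A : I -> structure ar),
      struct_family A -> Fin_learnable A -> Id_learnable A) /\
  (* Id <=_Learn co *)
  (forall (n : nat) (ar : 'I_n -> nat) (I : Type) (A : I -> structure ar),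
      struct_family A -> Id_learnable A -> co_learnable A) /\
  (* not Id <=_Learn Fin *)
  (exists (n : nat) (ar : 'I_n -> nat) (I : Type) (A : I -> structure ar),
      struct_family A /\ Id_learnable A /\ ~ Fin_learnable A) /\
  (* not co <=_Learn Id *)
  (exists (n : nat) (ar : 'I_n -> nat) (I : Type) (A : I -> structure ar),
      struct_family A /\ co_learnable A /\ ~ Id_learnable A) /\
  (* on finite families the three criteria coincide *)
  (forall (n : nat) (ar : 'I_n -> nat) (I : Type) (A : I -> structure ar),
      struct_family A -> finite_family I ->
      (Fin_learnable A <-> Id_learnable A) /\
      (Id_learnable A <-> co_learnable A)).
Proof.
split; first exact: fin_id.
split; first exact: id_co.
split; first by exists 1, sig2, nat, Af; split; [exact: Af_family|split; [exact: Af_id|exact: Af_notfin]].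
split; first by exists 1, sig2, nat, Bf; split; [exact: Bf_family|split; [exact: Bf_co|exact: Bf_notid]].
move=> n ar I A SF FF; split; split=> H.
- exact: fin_id.
- exact: co_fin SF FF (id_co SF H).
- exact: id_co.
- exact: fin_id SF (co_fin SF FF H).
Qed.
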